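(* Let $a\ge b\ge1$ be integers with either $b\ge2$, or $b=1$ and $a\ge5$, and $A=\begin{pmatrix}2&-a\\-b&2\end{pmatrix}$. For $j\in\mathbb Z_+$ set $\eta_j=-\langle\beta_1^j,(\beta_2^0)^\vee\rangle$ and $\gamma_j=-\langle\beta_2^{2j},(\beta_1^0)^\vee\rangle$. Then both sequences $\xi_j:=\eta_{2j}$ and $\zeta_j:=\eta_{2j+1}$ satisfy the recurrence $x_j=(ab-2)x_{j-1}-x_{j-2}$ ($j\ge2$) with initial conditions $\xi_0=a$, $\xi_1=a(ab-3)$ and $\zeta_0=ab-2$, $\zeta_1=\zeta_0^2-2$. Moreover $a\gamma_j=b\xi_j$ for all $j$; $(\eta_j)$ is constant if $a=b=2$; if $b=1$ and $a\ge5$ then $\eta_1<\eta_0<\eta_3<\eta_2<\eta_5<\cdots$; and in the remaining cases ($b\ge2$, $(a,b)\ne(2,2)$) $\eta_0<\eta_1<\eta_2<\cdots$.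
   Context: Let $\mathfrak g(A)$ have simple roots $\alpha_1,\alpha_2$, invariant form $(\alpha_1,\alpha_1)=2$, $(\alpha_2,\alpha_2)=2a/b$, $(\alpha_1,\alpha_2)=-a$, and for a real root $\beta$ let $\langle\lambda,\beta^\vee\rangle=2(\lambda,\beta)/(\beta,\beta)$. $\mathbb Z_+=\{0,1,2,\dots\}$. Define $c_0=d_0=0$, $c_1=d_1=1$, $c_{k+2}+c_k=a d_{k+1}$, $d_{k+2}+d_k=b c_{k+1}$, and $\beta_1^j=c_j\alpha_1+d_{j+1}\alpha_2$, $\beta_2^j=c_{j+1}\alpha_1+d_j\alpha_2$; in particular $\beta_2^0=\alpha_1$, $\beta_1^0=\alpha_2$. *)

(* Defs.v *)
From mathcomp Require Import all_boot all_order all_algebra.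
Set Implicit Arguments. Unset Strict Implicit. Unset Printing Implicit Defensive.
Import Order.TTheory GRing.Theory Num.Theory.
Local Open Scope ring_scope.

(* Rank-2 root lattice: an element x1*alpha_1 + x2*alpha_2 is the pair (x1, x2). *)

Fixpoint cd (a b : nat) (k : nat) : int * int * int * int :=
  match k with
  | 0%N => (0, 0, 1, 1)
  | k'.+1 => let '(c0, d0, c1, d1) := cd a b k' in
             (c1, d1, (a%:Z) * d1 - c0, (b%:Z) * c1 - d0)
  end.

Definition cseq (a b : nat) (k : nat) : int := (cd a b k).1.1.1.
Definition dseq (a b : nat) (k : nat) : int := (cd a b k).1.1.2.

Definition beta1 (a b : nat) (j : nat) : int * int := (cseq a b j, dseq a b j.+1).
Definition beta2 (a b : nat) (j : nat) : int * int := (cseq a b j.+1, dseq a b j).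

(* Invariant form: (a1,a1)=2, (a2,a2)=2a/b, (a1,a2)=-a, extended bilinearly. *)
Definition form (a b : nat) (x y : int * int) : rat :=
  2 * (x.1%:~R * y.1%:~R)
  - (a%:R) * (x.1%:~R * y.2%:~R + x.2%:~R * y.1%:~R)
  + (2 * (a%:R) / (b%:R)) * (x.2%:~R * y.2%:~R).

Definition copair (a b : nat) (lam beta : int * int) : rat :=
  2 * form a b lam beta / form a b beta beta.

Definition eta (a b : nat) (j : nat) : rat := - copair a b (beta1 a b j) (beta2 a b 0).
Definition gamma (a b : nat) (j : nat) : rat := - copair a b (beta2 a b (2 * j)) (beta1 a b 0).
Definition xi (a b : nat) (j : nat) : rat := eta a b (2 * j).
Definition zeta (a b : nat) (j : nat) : rat := eta a b (2 * j).+1.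

(* Main.v *)
Require Import Defs.
From mathcomp Require Import all_boot all_order all_algebra.
From mathcomp Require Import zify ring lra.
Import Order.TTheory GRing.Theory Num.Theory.
Local Open Scope ring_scope.

Lemma cdE a b k : cd a b k = (cseq a b k, dseq a b k, cseq a b k.+1, dseq a b k.+1).
Proof.
rewrite /cseq /dseq; elim: k => [|k IH] //=.
by rewrite IH /=.
Qed.

Lemma crec a b k : cseq a b k.+2 = a%:Z * dseq a b k.+1 - cseq a b k.
Proof. by rewrite {1}/cseq /= cdE. Qed.
Lemma drec a b k : dseq a b k.+2 = b%:Z * cseq a b k.+1 - dseq a b k.
Proof. by rewrite {1}/dseq /= cdE. Qed.

Lemma crec4 a b k : cseq a b k.+4 = (a%:Z * b%:Z - 2) * cseq a b k.+2 - cseq a b k.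
Proof.
have h : a%:Z * dseq a b k.+1 = cseq a b k.+2 + cseq a b k by rewrite crec; ring.
rewrite crec drec mulrBr h; ring.
Qed.
Lemma drec4 a b k : dseq a b k.+4 = (a%:Z * b%:Z - 2) * dseq a b k.+2 - dseq a b k.
Proof.
have h : b%:Z * cseq a b k.+1 = dseq a b k.+2 + dseq a b k by rewrite drec; ring.
rewrite drec crec mulrBr mulrCA h; ring.
Qed.

Definition E a b j : int := a%:Z * dseq a b j.+1 - 2 * cseq a b j.

Lemma Erec a b j : E a b j.+4 = (a%:Z * b%:Z - 2) * E a b j.+2 - E a b j.
Proof. rewrite /E crec4 drec4; ring. Qed.

Lemma E0 a b : E a b 0 = a. Proof. rewrite /E /cseq /dseq /=; ring. Qed.
Lemma E1 a b : E a b 1 = a%:Z * b%:Z - 2. Proof. rewrite /E /cseq /dseq /=; ring. Qed.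
Lemma E2 a b : E a b 2 = a%:Z * (a%:Z * b%:Z - 3). Proof. rewrite /E /cseq /dseq /=; ring. Qed.
Lemma E3 a b : E a b 3 = (a%:Z * b%:Z - 2)^+2 - 2. Proof. rewrite /E /cseq /dseq /=; ring. Qed.

Lemma etaE a b j : (0 < b)%N -> eta a b j = (E a b j)%:~R.
Proof.
move=> hb.
rewrite /eta /copair /beta2 /beta1 /E /=; unfold Defs.form => /=.
have -> : cseq a b 1 = 1 by [].
have -> : dseq a b 0 = 0 by [].
rewrite !rmorphB !rmorphM /=. field. by rewrite pnatr_eq0 -lt0n.
Qed.

Lemma par a b k : cseq a b k.*2.+1 = dseq a b k.*2.+1 /\ b%:Z * cseq a b k.*2 = a%:Z * dseq a b k.*2.
Proof.
elim: k => [|k [IH1 IH2]]; first by rewrite /cseq /dseq /=; split; ring.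
rewrite doubleS !crec !drec IH1.
split; first rewrite crec.
  all: rewrite !mulrBr IH2; ring.
Qed.

Lemma pos (x : nat -> int) (m : int) : 2 <= m -> 0 < x 0%N -> x 0%N <= x 1%N ->
  (forall k, x k.+2 = m * x k.+1 - x k) -> forall k, 0 < x k /\ x k <= x k.+1.
Proof.
move=> hm h0 h1 hr; elim=> [|k [IH1 IH2]]; first by [].
rewrite hr; split; first lia. nia.
Qed.

Lemma gammaE a b j : (0 < a)%N -> (0 < b)%N ->
  gamma a b j = (b%:Z * cseq a b (2 * j).+1 - 2 * dseq a b (2 * j))%:~R.
Proof.
move=> ha hb.
rewrite /gamma /copair /beta2 /beta1 /=; unfold Defs.form => /=.
have -> : cseq a b 0 = 0 by [].
have -> : dseq a b 1 = 1 by [].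
rewrite !rmorphB !rmorphM /=. field.
by rewrite !pnatr_eq0 -!lt0n ha hb.
Qed.

Lemma c22 k : cseq 2 2 k = k /\ cseq 2 2 k.+1 = k.+1 /\ dseq 2 2 k = k /\ dseq 2 2 k.+1 = k.+1.
Proof.
elim: k => [|k [h1 [h2 [h3 h4]]]]; first by [].
rewrite crec drec h1 h2 h3 h4; split; first by []. split; first lia. split; first by []. lia.
Qed.

Lemma intlt (x y : int) : x < y -> (x%:~R : rat) < y%:~R.
Proof. by rewrite ltr_int. Qed.

Theorem lemma3p8 (a b : nat) :
  (1 <= b)%N -> (b <= a)%N -> ((2 <= b)%N \/ (b = 1%N /\ (5 <= a)%N)) ->
  (forall j : nat, xi a b j.+2 = ((a * b)%:R - 2) * xi a b j.+1 - xi a b j) /\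
      xi a b 0 = a%:R /\
      xi a b 1 = a%:R * ((a * b)%:R - 3) /\
      (forall j : nat, zeta a b j.+2 = ((a * b)%:R - 2) * zeta a b j.+1 - zeta a b j) /\
      zeta a b 0 = (a * b)%:R - 2 /\
      zeta a b 1 = zeta a b 0 ^+ 2 - 2 /\
          (forall j : nat, a%:R * gamma a b j = b%:R * xi a b j) /\
          (a = 2%N -> b = 2%N -> forall j : nat, eta a b j = eta a b 0) /\
          (b = 1%N -> (5 <= a)%N ->
             forall j : nat, eta a b (2 * j).+1 < eta a b (2 * j)
                          /\ eta a b (2 * j) < eta a b (2 * j).+3) /\
          ((2 <= b)%N -> ~ (a = 2%N /\ b = 2%N) ->
             forall j : nat, eta a b j < eta a b j.+1).
Proof.
move=> hb hba hcase.
have ha : (0 < a)%N by lia.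
split.
  move=> j; rewrite /xi !etaE // !mul2n !doubleS Erec; rewrite natrM; ring.
split; first by rewrite /xi etaE // E0.
split; first by rewrite /xi etaE // E2 natrM; ring.
split.
  move=> j; rewrite /zeta !etaE // !mul2n !doubleS Erec; rewrite natrM; ring.
split; first by rewrite /zeta etaE // E1 natrM; ring.
split; first by rewrite /zeta !etaE // E1 E3; ring.
split.
  move=> j; rewrite gammaE // /xi etaE // /E.
  have [p1 p2] := par a b j.
  rewrite mul2n p1.
  have hi : a%:Z * (b%:Z * dseq a b j.*2.+1 - 2 * dseq a b j.*2)
     = b%:Z * (a%:Z * dseq a b j.*2.+1 - 2 * cseq a b j.*2).
    rewrite !mulrBr.
    have -> : b%:Z * (2 * cseq a b j.*2) = 2 * (a%:Z * dseq a b j.*2) by rewrite mulrCA p2.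
    ring.
  have := congr1 (fun z : int => z%:~R : rat) hi => /=.
  by rewrite !intrM.
split.
  move=> h1 h2 j; subst a b; rewrite !etaE // /E.
  have [h1 [h2 [h3 h4]]] := c22 j.
  have [h5 [h6 [h7 h8]]] := c22 0.
  rewrite h4 h1 h8 h5; congr (_%:~R); lia.
split.
  move=> h1 h5 j; subst b.
  pose x k := E a 1 k.*2 - E a 1 k.*2.+1.
  pose y k := E a 1 k.*2.+3 - E a 1 k.*2.
  have E5 : E a 1 5 = (a%:Z * 1%:Z - 2) * E a 1 3 - E a 1 1 by rewrite Erec.
  rewrite E3 E1 in E5.
  have hx := @pos x (a%:Z * 1%:Z - 2).
  have hy := @pos y (a%:Z * 1%:Z - 2).
  have [hx1 _] := hx ltac:(lia) ltac:(rewrite /x /= E0 E1; lia) ltac:(rewrite /x /= E0 E1 E2 E3; nia)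
     ltac:(move=> k; rewrite /x /= !doubleS !Erec; ring) j.
  have [hy1 _] := hy ltac:(lia) ltac:(rewrite /y /= E0 E3; nia) ltac:(rewrite /y /= E0 E3 E2 E5; nia)
     ltac:(move=> k; rewrite /y /= !doubleS !Erec; ring) j.
  rewrite !etaE // mul2n; split; apply: intlt; rewrite /x /y in hx1 hy1; lia.
move=> h2 hn j.
have hA : (3 <= a)%N by lia.
pose x k := E a b k.*2.+1 - E a b k.*2.
pose y k := E a b k.*2.+2 - E a b k.*2.+1.
have E4 : E a b 4 = (a%:Z * b%:Z - 2) * E a b 2 - E a b 0 by rewrite Erec.
rewrite E2 E0 in E4.
have hm : 4 <= a%:Z * b%:Z - 2 by nia.
have hx := @pos x (a%:Z * b%:Z - 2).
have hy := @pos y (a%:Z * b%:Z - 2).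
have hx1 : forall k, 0 < x k /\ x k <= x k.+1 := hx ltac:(lia) ltac:(rewrite /x /= E0 E1; nia) ltac:(rewrite /x /= E0 E1 E2 E3; nia)
   ltac:(move=> k; rewrite /x /= !doubleS !Erec; ring).
have hy1 : forall k, 0 < y k /\ y k <= y k.+1 := hy ltac:(lia) ltac:(rewrite /y /= E1 E2; nia) ltac:(rewrite /y /= E1 E2 E3 E4; nia)
   ltac:(move=> k; rewrite /y /= !doubleS !Erec; ring).
rewrite !etaE //; apply: intlt.
rewrite -(odd_double_half j); case: (odd j); rewrite ?add1n ?add0n.
  by have [+ _] := hy1 j./2; rewrite /y; lia.
by have [+ _] := hx1 j./2; rewrite /x; lia.
Qed.
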